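(* Let $a^1,\dots,a^N\in\mathbb{R}^{V_+}$ and $h\in\mathbb{R}$, and let $$\mathcal{H}=\Big\{(\theta,y)\in\mathbb{R}^{V_+}_{\ge0}\times\mathbb{R}^{[N]\times V_+}_{\ge0}:\ \sum_{\xi\in[N]}(a^\xi)^\top y^\xi\ge h,\ \ \theta_v\ge\sum_{\xi\in[N]}p_\xi w_vy^\xi_v\ \forall v\in V_+\Big\}.$$ Then: if there exist $v\in V_+$ and $\xi\in[N]$ with $w_v=0$ and $a^\xi_v>0$, the projection of $\mathcal{H}$ onto $\theta$ is $\mathbb{R}^{V_+}_{\ge0}$; otherwise the projection of $\mathcal{H}$ onto $\theta$ equals $$\Big\{\theta\in\mathbb{R}^{V_+}_{\ge0}:\ \sum_{v\in V_+:\,w_v>0}\Big(\max_{\xi\in[N]}\frac{a^\xi_v}{p_\xi w_v}\Big)^+\theta_v\ge h\Big\}.$$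
   Context: $V_+$ is a finite set (customers); $N$ is a positive integer; $p_\xi\in[0,1]$ for $\xi\in[N]$ with $\sum_\xi p_\xi=1$ are scenario probabilities; $w\in\mathbb{Q}^{V_+}_{\ge0}$ is a fixed weight vector. Vectors $y\in\mathbb{R}^{[N]\times V_+}$ have entries $y^\xi_v$, and $y^\xi\in\mathbb{R}^{V_+}$ is the restriction to scenario $\xi$. $(a)^+=\max\{a,0\}$. *)

(* Defs.v *)
From HB Require Import structures.
From mathcomp Require Import all_boot all_order all_algebra.
Set Implicit Arguments. Unset Strict Implicit. Unset Printing Implicit Defensive.
Import Order.TTheory GRing.Theory Num.Theory.
Local Open Scope ring_scope.

Definition posPart (R : realFieldType) (x : R) : R := Num.max x 0.

Definition inH (R : realFieldType) (V : finType) (N : nat)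
    (p : 'I_N -> R) (w : V -> rat) (a : 'I_N -> V -> R) (h : R)
    (theta : V -> R) (y : 'I_N -> V -> R) : Prop :=
  (forall v, 0 <= theta v) /\
  (forall xi v, 0 <= y xi v) /\
  h <= \sum_(xi < N) \sum_(v : V) a xi v * y xi v /\
  (forall v, \sum_(xi < N) p xi * ratr (w v) * y xi v <= theta v).

Definition projH (R : realFieldType) (V : finType) (N : nat)
    (p : 'I_N -> R) (w : V -> rat) (a : 'I_N -> V -> R) (h : R)
    (theta : V -> R) : Prop :=
  exists y : 'I_N -> V -> R, inH p w a h theta y.

(* Main.v *)
Require Import Defs.
From HB Require Import structures.
From mathcomp Require Import all_boot all_order all_algebra.
Import Order.TTheory GRing.Theory Num.Theory.
Local Open Scope ring_scope.

Lemma bmax_ge0 (R : realFieldType) (N : nat) (F : 'I_N -> R) :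
  0 <= \big[Num.max/0]_(xi < N) F xi.
Proof.
by apply: (big_rec (fun x => 0 <= x)) => // i x _ hx; rewrite le_max hx orbT.
Qed.

Lemma bmax_ge (R : realFieldType) (N : nat) (F : 'I_N -> R) i :
  F i <= \big[Num.max/0]_(xi < N) F xi.
Proof.
by rewrite (bigD1 i) //= le_max lexx.
Qed.

Lemma bmax_cases (R : realFieldType) (N : nat) (F : 'I_N -> R) :
  \big[Num.max/0]_(xi < N) F xi = 0 \/ exists i, \big[Num.max/0]_(xi < N) F xi = F i.
Proof.
apply: (big_ind (fun x => x = 0 \/ exists i, x = F i)); first by left.
- move=> x y hx hy; case: (leP x y) => _; by [].
- by move=> i _; right; exists i.
Qed.

Theorem lemma5 (R : realFieldType) (V : finType) (N : nat)
    (p : 'I_N -> R) (w : V -> rat) (a : 'I_N -> V -> R) (h : R) :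
  (0 < N)%N ->
  (forall xi, 0 < p xi) -> (forall xi, p xi <= 1) ->
  \sum_(xi < N) p xi = 1 ->
  (forall v, 0 <= w v) ->
  ((exists v xi, w v = 0 /\ 0 < a xi v) ->
     forall theta : V -> R, projH p w a h theta <-> (forall v, 0 <= theta v)) /\
  (~ (exists v xi, w v = 0 /\ 0 < a xi v) ->
     forall theta : V -> R, projH p w a h theta <->
       ((forall v, 0 <= theta v) /\
        h <= \sum_(v : V | 0 < w v)
               posPart (\big[Num.max/0]_(xi < N) (a xi v / (p xi * ratr (w v))))
               * theta v)).
Proof.
move=> N0 p0 p1 psum w0; split.
  move=> [v0 [xi0 [wv0 av0]]] theta; split; first by case=> y [].
  move=> th0.
  exists (fun xi v => if (xi == xi0) && (v == v0) then Num.max h 0 / a xi0 v0 else 0).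
  split=> //; split.
    by move=> xi v; case: ifP => // _; apply: divr_ge0; [rewrite le_max lexx orbT|apply: ltW].
  split.
    rewrite (bigD1 xi0) //= [X in _ + X]big1 ?addr0; last first.
      by move=> i ne; apply: big1 => v _; rewrite (negbTE ne) mulr0.
    rewrite (bigD1 v0) //= [X in _ + X]big1 ?addr0; last first.
      by move=> v ne; rewrite (negbTE ne) andbF mulr0.
    rewrite !eqxx /= mulrCA divff ?mulr1 ?le_max ?lexx //.
    by rewrite gt_eqF.
  move=> v; rewrite big1 //= => xi _.
  case: (v =P v0) => [->|ne]; first by rewrite wv0 rmorph0 mulr0 mul0r.
  by rewrite andbF mulr0.
move=> nex theta.
have wneg : forall v xi, w v = 0 -> a xi v <= 0.
  move=> v xi wv; rewrite leNgt; apply/negP => ha; apply: nex; by exists v, xi.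
set c := fun xi v => a xi v / (p xi * ratr (w v)).
set B := fun v => \big[Num.max/0]_(xi < N) c xi v.
have posB : forall v, posPart (B v) = B v.
  by move=> v; rewrite /posPart; apply/max_idPl; apply: bmax_ge0.
under eq_bigr do rewrite posB.
split.
  case=> y [th0 [y0 [hle cons]]]; split=> //.
  apply: (le_trans hle); rewrite exchange_big /= [X in _ <= X]big_mkcond /=.
  apply: ler_sum => v _.
  case: ifP => wpos.
    have wr : 0 < ratr (w v) :> R by rewrite ltr0q.
    apply: (@le_trans _ _ (B v * \sum_(xi < N) p xi * ratr (w v) * y xi v)); last first.
      by apply: ler_wpM2l; [apply: bmax_ge0|apply: cons].
    rewrite mulr_sumr; apply: ler_sum => xi _.
    have -> : a xi v * y xi v = c xi v * (p xi * ratr (w v) * y xi v).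
      rewrite /c mulrA divfK // mulf_neq0 // gt_eqF //.
    apply: ler_wpM2r; last by apply: bmax_ge.
    by rewrite mulr_ge0 // mulr_ge0 // ltW.
  have wv : w v = 0 by apply/eqP; rewrite eq_le w0 andbT leNgt wpos.
  apply: sumr_le0 => xi _; apply: mulr_le0_ge0 => //; exact: wneg.
case=> th0 hle.
pose pk v := [pick j | B v == c j v].
exists (fun xi v => if (0 < w v) && (pk v == Some xi) then theta v / (p xi * ratr (w v)) else 0).
split=> //; split.
  move=> xi v; case: ifP => // /andP [wpos _]; apply: divr_ge0 => //.
  by rewrite mulr_ge0 // ?ltW // ltr0q.
split.
  apply: (le_trans hle); rewrite exchange_big /= big_mkcond /=.
  rewrite le_eqVlt; apply/orP; left; apply/eqP; apply: eq_bigr => v _.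
  case: ifP => wpos /=; last by rewrite big1 // => xi _; rewrite mulr0.
  rewrite /pk; case: pickP => [j /eqP Hj|Hn].
    rewrite (bigD1 j) //= eqxx [X in _ + X]big1 ?addr0; last first.
      by move=> i ne; rewrite (inj_eq Some_inj) eq_sym (negbTE ne) mulr0.
    by rewrite Hj /c mulrA mulrAC.
  rewrite big1; last by move=> xi _; rewrite mulr0.
  case: (@bmax_cases _ _ (fun xi => c xi v)) => [H0|[i Hi]]; first by rewrite /B H0 mul0r.
  by move: (Hn i); rewrite /B Hi eqxx.
move=> v.
case: (boolP (0 < w v)) => wpos; last by rewrite big1 //= => xi _; rewrite mulr0.
have wr : 0 < ratr (w v) :> R by rewrite ltr0q.
case: (pk v) => [j|]; last by rewrite big1 //= => xi _; rewrite mulr0.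
rewrite (bigD1 j) //= eqxx [X in _ + X]big1 ?addr0; last first.
  by move=> i ne; rewrite (inj_eq Some_inj) eq_sym (negbTE ne) mulr0.
rewrite mulrC divfK // mulf_neq0 // gt_eqF //.
Qed.
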